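(* Every search game (as defined in the context) is weakly acyclic: for every pure strategy profile $s^{1}\in S$ there exists an improvement path $(s^{1},\ldots,s^{T})$ starting at $s^{1}$ such that $s^{T}$ is a pure (Bayesian) Nash equilibrium.
   Context: A search game $G=(N,\Omega,\Pi,\mu,K,c,v)$ consists of: a finite set of players $N=\{1,\ldots,n\}$; a finite set $\Omega$ of locations (the prize is hidden in exactly one location, the true state); for each player $i$ a partition $\Pi_i$ of $\Omega$ into cells, where $\pi_i(\omega)$ denotes the cell of $\Pi_i$ containing $\omega$ (player $i$ observes the cell containing the true location); a common prior $\mu\in\Delta(\Omega)$ with $\mu(\pi_i)>0$ for every cell $\pi_i\in\Pi_i$ and every $i$, where $\mu(E)=\sum_{\omega\in E}\mu(\omega)$; a capacity $K_i\in\mathbb{N}$ for each player; a cost function $c_i:\{0,\ldots,K_i\}\to\mathbb{R}_{\ge 0}$ with $c_i(0)=0$ and $c_i(k+1)-c_i(k)\ge c_i(k)-c_i(k-1)$ for $1\le k\le K_i-1$; rewards $v_i^m(\omega)\ge 0$ for each player $i$, location $\omega$, and $m\in\{1,\ldots,n\}$, with $v_i^{m+1}(\omega)\le v_i^m(\omega)$; and social values $v_{\mathfrak{s}}(\omega)\ge 0$. A pure strategy $s_i$ of player $i$ assigns to each cell $\pi_i\in\Pi_i$ a subset $s_i(\pi_i)\subseteq\pi_i$ with at most $K_i$ elements; $S_i$ is the set of these and $S=\prod_i S_i$. For a profile $s$ let $m_s(\omega)=\sum_{i\in N}\mathbf{1}_{\omega\in s_i(\pi_i(\omega))}$. Player $i$'s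 payoff given location $\omega$ is $u_i(s|\omega)=\mathbf{1}_{\omega\in s_i(\pi_i(\omega))}v_i^{m_s(\omega)}(\omega)-c_i(|s_i(\pi_i(\omega))|)$, and $u_i(s)=\sum_{\omega\in\Omega}\mu(\omega)u_i(s|\omega)$. A profile $s$ is a (pure Bayesian) Nash equilibrium if $u_i(s)\ge u_i(s_i',s_{-i})$ for all $i$ and all $s_i'\in S_i$. A sequence $(s^{1},\ldots,s^{T})$ of pure profiles is an improvement path if for every $t<T$ there is a player $i_t$ with $s^{t}_j=s^{t+1}_j$ for all $j\ne i_t$ and $u_{i_t}(s^{t+1})>u_{i_t}(s^{t})$. *)

(* Defs.v *)
From HB Require Import structures.
From mathcomp Require Import all_boot all_order all_algebra.
Set Implicit Arguments. Unset Strict Implicit. Unset Printing Implicit Defensive.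
Import Order.TTheory GRing.Theory Num.Theory.
Local Open Scope ring_scope.

Section SearchGame.
Variables (R : realFieldType) (n : nat) (Omega : finType).

(* Raw data of a search game with players 'I_n (player i+1 in the paper is i). *)
Record search_game := SearchGame {
  cell  : 'I_n -> Omega -> {set Omega};
  prior : Omega -> R;
  cap   : 'I_n -> nat;
  cost  : 'I_n -> nat -> R;              (* c_i (only used on 0..K_i) *)
  rew   : 'I_n -> nat -> Omega -> R;
  soc   : Omega -> R
}.

Variable G : search_game.

Definition valid_game : Prop :=
  (* each Pi_i is a partition of Omega, described by w |-> pi_i(w) *)
  (forall i w, w \in cell G i w) /\
  (forall i w w', w' \in cell G i w -> cell G i w' = cell G i w) /\
  (forall w, 0 <= prior G w) /\ (\sum_w prior G w = 1) /\
  (forall i w, 0 < \sum_(w' in cell G i w) prior G w') /\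
  (forall i, cost G i 0 = 0) /\
  (forall i k, (k <= cap G i)%N -> 0 <= cost G i k) /\
  (forall i k, (1 <= k)%N -> (k <= (cap G i).-1)%N ->
      cost G i k - cost G i k.-1 <= cost G i k.+1 - cost G i k) /\
  (forall i m w, (1 <= m <= n)%N -> 0 <= rew G i m w) /\
  (forall i m w, (1 <= m)%N -> (m.+1 <= n)%N -> rew G i m.+1 w <= rew G i m w) /\
  (forall w, 0 <= soc G w).

(* A pure strategy: a map w |-> s(pi_i(w)), given on locations and constant on cells. *)
Definition strategy := {ffun Omega -> {set Omega}}.
Definition profile := {ffun 'I_n -> strategy}.

Definition valid_strategy (i : 'I_n) (si : strategy) : Prop :=
  (forall w w', w' \in cell G i w -> si w' = si w) /\
  (forall w, si w \subset cell G i w) /\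
  (forall w, (#|si w| <= cap G i)%N).

Definition valid_profile (s : profile) : Prop :=
  forall i, valid_strategy i (s i).

Definition searchers (s : profile) (w : Omega) : nat :=
  #|[set j : 'I_n | w \in s j w]|.

Definition payoff_at (s : profile) (i : 'I_n) (w : Omega) : R :=
  (w \in s i w)%:R * rew G i (searchers s w) w - cost G i #|s i w|.

Definition payoff (s : profile) (i : 'I_n) : R :=
  \sum_w prior G w * payoff_at s i w.

Definition deviate (s : profile) (i : 'I_n) (si : strategy) : profile :=
  [ffun j => if j == i then si else s j].

Definition nash (s : profile) : Prop :=
  forall i (si : strategy), valid_strategy i si -> payoff (deviate s i si) i <= payoff s i.

Definition improvement_step (s t : profile) : Prop :=
  valid_profile t /\
  exists i : 'I_n, (forall j, j != i -> t j = s j) /\ payoff s i < payoff t i.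

Fixpoint improvement_path (s : profile) (p : seq profile) : Prop :=
  match p with
  | [::] => True
  | t :: p' => improvement_step s t /\ improvement_path t p'
  end.

End SearchGame.

(* Main.v *)
Require Import Defs.
From mathcomp Require Import all_boot all_order all_algebra.
From mathcomp Require Import zify ring lra.
From Stdlib Require Import Classical.
Set Implicit Arguments. Unset Strict Implicit. Unset Printing Implicit Defensive.
Import Order.TTheory GRing.Theory Num.Theory.
Local Open Scope ring_scope.

Section Abs.
Variables (R : realFieldType) (T : finType) (Cost : nat -> R) (K : nat).
Hypothesis Cconv : forall j, (1 <= j)%N -> (j < K)%N -> Cost j - Cost j.-1 <= Cost j.+1 - Cost j.

Implicit Types (S X F G Y : {set T}) (v u : T -> R).

Definition Dl j := Cost j - Cost j.-1.

Lemma Dl_mono i j : (1 <= i)%N -> (i <= j)%N -> (j <= K)%N -> Dl i <= Dl j.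
Proof.
move=> i1; elim: j => [|j IH] ij jK; first by move: (leq_trans i1 ij).
case: (ltngtP i j.+1) ij => // [lt _|-> _]; last exact: lexx.
apply: le_trans (IH lt (ltnW jK)) _.
exact: Cconv (leq_trans i1 lt) jK.
Qed.

Lemma cost_up k d : (k + d <= K)%N -> d%:R * Dl k.+1 <= Cost (k + d) - Cost k.
Proof.
elim: d => [|d IH] H; first by rewrite mul0r addn0 subrr.
have H1 : (k + d <= K)%N by lia.
have := IH H1. have : Dl k.+1 <= Dl (k + d).+1 by apply: Dl_mono; lia.
rewrite /Dl addnS /= -natr1 mulrDl mul1r. lra.
Qed.

Lemma cost_down k d : (d <= k)%N -> (k <= K)%N -> Cost k - Cost (k - d) <= d%:R * Dl k.
Proof.
elim: d => [|d IH] dk kK; first by rewrite subn0 subrr mul0r.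
have := IH (ltnW dk) kK.
have : Dl (k - d) <= Dl k by apply: Dl_mono; lia.
have -> : (k - d.+1 = (k - d).-1)%N by lia.
rewrite /Dl -natr1 mulrDl mul1r. lra.
Qed.

Definition fam (F G : {set T}) k (X : {set T}) :=
  [&& F \subset X, X \subset G & (#|X| <= k)%N].
Definition obj (v : T -> R) (X : {set T}) := \sum_(x in X) v x - Cost #|X|.
Definition opt (F G : {set T}) k (v : T -> R) (S : {set T}) := fam F G k S /\ forall X, fam F G k X -> obj v X <= obj v S.
Definition conds (F G : {set T}) k (v : T -> R) (S : {set T}) :=
  [/\ (forall a b, a \in S -> a \notin F -> b \in G -> b \notin S -> v b <= v a),
      (forall a, a \in S -> a \notin F -> Dl #|S| <= v a) &
      ((#|S| < k)%N -> forall b, b \in G -> b \notin S -> v b <= Dl #|S|.+1)].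

Lemma ex_argmax (A : {set T}) (f : T -> R) :
  A != set0 -> exists2 a, a \in A & forall b, b \in A -> f b <= f a.
Proof.
case/set0Pn=> a0 a0A.
case: (@arg_maxP _ _ T a0 (mem A) f a0A) => a aA H.
by exists a => // b bA; exact: H.
Qed.

Lemma ex_argmin (A : {set T}) (f : T -> R) :
  A != set0 -> exists2 a, a \in A & forall b, b \in A -> f a <= f b.
Proof.
move=> /(ex_argmax (fun x => - f x)) [a aA H]; exists a => // b bA.
by rewrite -lerN2 H.
Qed.

Lemma thresh (A B : {set T}) (f : T -> R) (x0 : R) :
  (forall a b, a \in A -> b \in B -> f b <= f a) -> (forall a, a \in A -> x0 <= f a) ->
  exists rho, [/\ x0 <= rho, (forall b, b \in B -> f b <= rho) & (forall a, a \in A -> rho <= f a)].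
Proof.
move=> H1 H2; case: (eqVneq B set0) => [->|Bn].
  by exists x0; split=> // b; rewrite inE.
case: (ex_argmax f Bn) => b0 b0B Hb0.
exists (Num.max x0 (f b0)); split.
- by rewrite le_max lexx.
- by move=> b bB; rewrite le_max Hb0 ?orbT.
- by move=> a aA; rewrite ge_max H2 // H1.
Qed.

Lemma thresh' (A B : {set T}) (f : T -> R) (x0 : R) :
  (forall a b, a \in A -> b \in B -> f b <= f a) -> (forall b, b \in B -> f b <= x0) ->
  exists lam, [/\ lam <= x0, (forall b, b \in B -> f b <= lam) & (forall a, a \in A -> lam <= f a)].
Proof.
move=> H1 H2.
have [rho [r1 r2 r3]] := @thresh B A (fun x => - f x) (- x0)
  (fun b a bB aA => ltac:(rewrite lerN2; exact: H1)) (fun b bB => ltac:(rewrite lerN2; exact: H2)).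
exists (- rho); split.
- by rewrite lerNl.
- by move=> b bB; rewrite lerNr r3.
- by move=> a aA; rewrite lerNl r2.
Qed.

Lemma L0 F G k v S : (k <= K)%N -> fam F G k S -> conds F G k v S -> opt F G k v S.
Proof.
move=> kK HS [sw dr ad]; split=> // X.
case/and3P: (HS) => FS SG Sk; case/and3P => FX XG Xk.
rewrite /obj [\sum_(x in X) _](big_setID S) [\sum_(x in S) _](big_setID X) /= setIC.
have cS := cardsID X S. have cX := cardsID S X. rewrite setIC in cX.
set c := #|S :&: X| in cS cX *. set a := #|S :\: X| in cS. set b := #|X :\: S| in cX.
have inSX x : x \in S :\: X -> [/\ x \in S, x \notin F & x \notin X].
  rewrite inE => /andP[xX xS]; split=> //; apply: contra xX; exact: (subsetP FX).
have inXS y : y \in X :\: S -> [/\ y \in G, y \notin S & y \in X].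
  rewrite inE => /andP[yS yX]; split=> //; exact: (subsetP XG).
case: (leqP b a) => ba.
- have [rho [r1 r2 r3]] := @thresh (S :\: X) (X :\: S) v (Dl #|S|)
     (fun x y xA yB => ltac:(case: (inSX x xA) (inXS y yB) => ? ? ? [? ? ?]; exact: sw))
     (fun x xA => ltac:(case: (inSX x xA) => ? ? ?; exact: dr)).
  have s1 : \sum_(y in X :\: S) v y <= b%:R * rho.
    by rewrite mulr_natl -sumr_const; apply: ler_sum => y /r2.
  have s2 : a%:R * rho <= \sum_(x in S :\: X) v x.
    by rewrite mulr_natl -sumr_const; apply: ler_sum => y /r3.
  have cd := @cost_down #|S| (a - b)%N ltac:(lia) ltac:(lia).
  rewrite (_ : (#|S| - (a - b) = #|X|)%N) in cd; last by lia.
  have e : (a%:R : R) = b%:R + (a - b)%N%:R by rewrite -natrD; congr (_%:R); lia.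
  have m : (a - b)%N%:R * Dl #|S| <= (a - b)%N%:R * rho by apply: ler_wpM2l.
  rewrite e mulrDl in s2. lra.
- have Sk' : (#|S| < k)%N by lia.
  have [lam [l1 l2 l3]] := @thresh' (S :\: X) (X :\: S) v (Dl #|S|.+1)
     (fun x y xA yB => ltac:(case: (inSX x xA) (inXS y yB) => ? ? ? [? ? ?]; exact: sw))
     (fun y yB => ltac:(case: (inXS y yB) => ? ? ?; exact: ad)).
  have s1 : \sum_(y in X :\: S) v y <= b%:R * lam.
    by rewrite mulr_natl -sumr_const; apply: ler_sum => y /l2.
  have s2 : a%:R * lam <= \sum_(x in S :\: X) v x.
    by rewrite mulr_natl -sumr_const; apply: ler_sum => y /l3.
  have cu := @cost_up #|S| (b - a)%N ltac:(lia).
  rewrite (_ : (#|S| + (b - a) = #|X|)%N) in cu; last by lia.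
  have e : (b%:R : R) = a%:R + (b - a)%N%:R by rewrite -natrD; congr (_%:R); lia.
  have m : (b - a)%N%:R * lam <= (b - a)%N%:R * Dl #|S|.+1 by apply: ler_wpM2l.
  rewrite e mulrDl in s1. lra.
Qed.


Lemma sumD1 (v : T -> R) S r : r \in S -> \sum_(x in S :\ r) v x = \sum_(x in S) v x - v r.
Proof. by move=> rS; rewrite [X in _ = X - _](big_setD1 r rS) /= addrC addrK. Qed.

Lemma sumU1 (v : T -> R) S y : y \notin S -> \sum_(x in y |: S) v x = v y + \sum_(x in S) v x.
Proof. by move=> yS; rewrite big_setU1. Qed.

Lemma card_swap (S : {set T}) r y : r \in S -> y \notin S -> #|y |: (S :\ r)| = #|S|.
Proof.
move=> rS yS; rewrite cardsU1 (cardsD1 r S) rS inE negb_and yS orbT /=.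
by rewrite add1n.
Qed.

Lemma obj_swap v S r y : r \in S -> y \notin S -> obj v (y |: (S :\ r)) = obj v S - v r + v y.
Proof.
move=> rS yS; rewrite /obj card_swap // sumU1; last by rewrite inE negb_and yS orbT.
rewrite sumD1 //; ring.
Qed.

Lemma obj_add v S y : y \notin S -> obj v (y |: S) = \sum_(x in S) v x + v y - Cost #|S|.+1.
Proof. by move=> yS; rewrite /obj sumU1 // cardsU1 yS /= add1n (addrC (v y)). Qed.

Lemma obj_del v S r : r \in S -> obj v (S :\ r) = \sum_(x in S) v x - v r - Cost #|S|.-1.
Proof. by move=> rS; rewrite /obj sumD1 // [in RHS](cardsD1 r S) rS. Qed.

Lemma fam_swap F G k S a b : fam F G k S -> a \in S -> a \notin F -> b \in G -> b \notin S ->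
  fam F G k (b |: (S :\ a)).
Proof.
case/and3P=> FS SG Sk aS aF bG bS; apply/and3P; split.
- apply/subsetP=> x xF; rewrite !inE (subsetP FS) // andbT.
  by apply/orP; right; apply: contraNneq aF => <-.
- by apply/subsetP=> x; rewrite !inE => /orP[/eqP->//|/andP[_ /(subsetP SG)]].
- by rewrite card_swap.
Qed.

Lemma fam_del F G k S a : fam F G k S -> a \in S -> a \notin F -> fam F G k (S :\ a).
Proof.
case/and3P=> FS SG Sk aS aF; apply/and3P; split.
- apply/subsetP=> x xF; rewrite !inE (subsetP FS) // andbT.
  by apply: contraNneq aF => <-.
- by apply/subsetP=> x; rewrite !inE => /andP[_ /(subsetP SG)].
- by rewrite (cardsD1 a S) aS in Sk; lia.
Qed.

Lemma fam_add F G k S b : fam F G k S -> b \in G -> (#|S| < k)%N -> fam F G k (b |: S).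
Proof.
case/and3P=> FS SG Sk bG Sk'; apply/and3P; split.
- by apply/subsetP=> x xF; rewrite !inE (subsetP FS) ?orbT.
- by apply/subsetP=> x; rewrite !inE => /orP[/eqP->//|/(subsetP SG)].
- by rewrite cardsU1; case: (b \in S) => /=; lia.
Qed.

Lemma L0' F G k v S : opt F G k v S -> conds F G k v S.
Proof.
case=> HS Hopt; have HS' := HS; case/and3P: HS' => FS SG Sk; split.
- move=> a b aS aF bG bS; have := Hopt _ (fam_swap HS aS aF bG bS).
  rewrite obj_swap //; lra.
- move=> a aS aF; have := Hopt _ (fam_del HS aS aF).
  rewrite obj_del // /obj /Dl; lra.
- move=> Sk' b bG bS; have := Hopt _ (fam_add HS bG Sk').
  rewrite obj_add // /obj /Dl /=; lra.
Qed.

Lemma opt_ext F G k v v' S : (forall x, x \in G -> v x = v' x) -> opt F G k v S -> opt F G k v' S.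
Proof.
move=> E [HS H]; have EX X : X \subset G -> obj v X = obj v' X.
  by move=> XG; rewrite /obj; congr (_ - _); apply: eq_bigr => x /(subsetP XG)/E.
split=> // X HX; rewrite -!EX; first exact: H.
- by case/and3P: HS.
- by case/and3P: HX.
Qed.

Lemma M3 F G k u v S : opt F G k u S -> (forall x, x \in G -> x \in S -> u x <= v x) ->
  (forall x, x \in G -> x \notin S -> v x <= u x) -> opt F G k v S.
Proof.
move=> [HS H] H1 H2; split=> // X HX.
have E Y : obj v Y = obj u Y + \sum_(x in Y) (v x - u x).
  by rewrite /obj sumrB; ring.
rewrite !E.
have : \sum_(x in X) (v x - u x) <= \sum_(x in S) (v x - u x).
  rewrite [X in X <= _]big_mkcond [X in _ <= X]big_mkcond /=; apply: ler_sum => x _.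
  case/and3P: HS => _ SG _; case/and3P: HX => _ XG _.
  case: (boolP (x \in G)) => xG; last first.
    by rewrite (negbTE (contraNN (subsetP XG x) xG)) (negbTE (contraNN (subsetP SG x) xG)).
  case: (boolP (x \in S)) => xS; case: (x \in X) => //.
  - by rewrite subr_ge0 H1.
  - by rewrite subr_le0 H2.
have := H X HX; lra.
Qed.

Lemma conds_weakF F G k v S z : conds F G k v S -> conds (z |: F) G k v S.
Proof.
case=> sw dr ad; split=> //.
- by move=> a b aS; rewrite inE negb_or => /andP[_ aF]; apply: sw.
- by move=> a aS; rewrite inE negb_or => /andP[_ aF]; apply: dr.
Qed.

Lemma conds_weakG F G k v S y : conds F G k v S -> conds F (G :\ y) k v S.
Proof.
case=> sw dr ad; split=> //.
- by move=> a b aS aF; rewrite inE => /andP[_ bG]; apply: sw.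
- by move=> Sk b; rewrite inE => /andP[_ bG]; apply: ad.
Qed.

Lemma Force F G k v S y : (k <= K)%N -> fam F (G :\ y) k S -> conds F (G :\ y) k v S ->
  y \in G -> y \notin F ->
  (forall X, ~~ fam (y |: F) G k X) \/
  exists S', [/\ ((#|S| < k)%N /\ S' = y |: S) \/
                 (exists r, [/\ r \in S, r \notin F & S' = y |: (S :\ r)]) &
                 opt (y |: F) G k v S'].
Proof.
move=> kK HS [sw dr ad] yG yF.
have HS' := HS; case/and3P: HS' => FS SG Sk.
have yS : y \notin S by apply/negP => /(subsetP SG); rewrite !inE eqxx.
have inG b : b \in G -> b != y -> b \in G :\ y by move=> bG bny; rewrite !inE bny.
have famA : (#|S| < k)%N -> fam (y |: F) G k (y |: S).
  move=> Sk'; apply/and3P; split.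
  - by apply: setUS.
  - by apply/subsetP=> x; rewrite !inE => /orP[/eqP->//|/(subsetP SG)]; rewrite !inE => /andP[].
  - by rewrite cardsU1 yS.
have adA : (#|y |: S| < k)%N -> forall b, b \in G -> b \notin y |: S -> v b <= Dl #|y |: S|.+1.
  rewrite cardsU1 yS add1n => Sk' b bG; rewrite !inE negb_or => /andP[bny bS].
  apply: le_trans (ad (ltnW Sk') b (inG b bG bny) bS) _.
  by apply: Dl_mono => //; lia.
have GsubG : forall x, x \in G :\ y -> x \in G by move=> x; rewrite inE => /andP[].
case: (eqVneq (S :\: F) set0) => SF.
- have SeqF a : a \in S -> a \in F.
    move=> aS; apply/negPn/negP => aF.
    have : a \in S :\: F by rewrite inE aF aS.
    by rewrite SF inE.
  case: (ltnP #|S| k) => Sk'.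
  + right; exists (y |: S); split; first by left.
    apply: L0 => //; first exact: famA.
    split.
    * move=> a b; rewrite !inE negb_or => /orP[/eqP->|aS] /andP[ay aF].
        by rewrite eqxx in ay.
      by rewrite SeqF in aF.
    * move=> a; rewrite !inE negb_or => /orP[/eqP->|aS] /andP[ay aF].
        by rewrite eqxx in ay.
      by rewrite SeqF in aF.
    * exact: adA.
  + left => X; apply/negP => /and3P[FX XG Xk].
    have h1 := subset_leq_card FX. have h2 := subset_leq_card FS.
    have h3 : (#|S| <= #|F|)%N by apply: subset_leq_card; apply/subsetP => a /SeqF.
    rewrite cardsU1 yF in h1; lia.
- have [r rSF rmin] := ex_argmin v SF.
  have [rF rS] : r \notin F /\ r \in S by move: rSF; rewrite inE => /andP[].
  case: (boolP ((#|S| < k)%N && (Dl #|S|.+1 <= v r))) => [/andP[Sk' Dr]|nc].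
  + right; exists (y |: S); split; first by left.
    apply: L0 => //; first exact: famA. split.
    * move=> a b; rewrite !inE negb_or => /orP[/eqP->|aS] /andP[ay aF].
        by rewrite eqxx in ay.
      move=> bG; rewrite negb_or => /andP[bny bS]; exact: sw aS aF (inG b bG bny) bS.
    * move=> a; rewrite !inE negb_or => /orP[/eqP->|aS] /andP[ay aF].
        by rewrite eqxx in ay.
      rewrite cardsU1 yS add1n; apply: le_trans Dr _; apply: rmin; by rewrite inE aF aS.
    * exact: adA.
  + right; exists (y |: (S :\ r)); split; first by right; exists r.
    apply: L0 => //.
    * apply/and3P; split.
      - apply/subsetP => x; rewrite !inE => /orP[->//|xF].
        by rewrite (subsetP FS) // andbT orbC; apply/orP; left; apply: contraNneq rF => <-.
      - apply/subsetP => x; rewrite !inE => /orP[/eqP->//|/andP[_ /(subsetP SG) /GsubG]] //.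
      - by rewrite card_swap.
    * split; rewrite ?card_swap //.
      - move=> a b; rewrite !inE !negb_or => /orP[/eqP->|/andP[ar aS]] /andP[ay aF].
          by rewrite eqxx in ay.
        move=> bG /andP[bny]; rewrite negb_and negbK => /orP[/eqP->|bS].
          by apply: rmin; rewrite inE aF aS.
        exact: sw aS aF (inG b bG bny) bS.
      - move=> a; rewrite !inE !negb_or => /orP[/eqP->|/andP[ar aS]] /andP[ay aF].
          by rewrite eqxx in ay.
        exact: dr.
      - move=> Sk' b bG; rewrite !inE !negb_or => /andP[bny]; rewrite negb_and negbK => /orP[/eqP->|bS].
          by move: nc; rewrite Sk' /= -ltNge => /ltW.
        exact: ad Sk' b (inG b bG bny) bS.
Qed.


Lemma Forbid F G k v S z : (k <= K)%N -> fam F G k S -> conds (z |: F) G k v S -> z \in S -> z \notin F ->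
  exists S', (S' = S :\ z \/ exists w, [/\ w \in G, w \notin S & S' = w |: (S :\ z)]) /\
             opt F (G :\ z) k v S'.
Proof.
move=> kK HS [sw dr ad] zS zF.
have HS' := HS; case/and3P: HS' => FS SG Sk.
have nzF a : a \notin F -> a != z -> a \notin z |: F by move=> aF az; rewrite !inE negb_or az aF.
have xFz x : x \in F -> x != z by move=> xF; apply: contraNneq zF => <-.
have cD : #|S :\ z| = #|S|.-1 by rewrite [in RHS](cardsD1 z S) zS.
have famD : fam F (G :\ z) k (S :\ z).
  apply/and3P; split.
  - by apply/subsetP => x xF; rewrite !inE (subsetP FS) // andbT xFz.
  - by apply/subsetP => x; rewrite !inE => /andP[-> /(subsetP SG)].
  - by rewrite cD; lia.
have drD : forall a, a \in S :\ z -> a \notin F -> Dl #|S :\ z| <= v a.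
  move=> a aSz aF; have c0 : (0 < #|S :\ z|)%N by apply/card_gt0P; exists a.
  move: aSz; rewrite !inE => /andP[az aS].
  apply: (@le_trans _ _ (Dl #|S|)); first by apply: Dl_mono; rewrite ?cD; lia.
  exact: dr a aS (nzF a aF az).
have swD : forall a b, a \in S :\ z -> a \notin F -> b \in G :\ z -> b \notin S :\ z -> v b <= v a.
  move=> a b; rewrite !inE => /andP[az aS] aF /andP[bz bG]; rewrite bz /= => bS.
  exact: sw aS (nzF a aF az) bG bS.
case: (eqVneq (G :\: S) set0) => GS.
- exists (S :\ z); split; first by left.
  apply: L0 => //; split => //.
  move=> _ b; rewrite !inE => /andP[bz bG]; rewrite bz /= => bS.
  have : b \in G :\: S by rewrite inE bS bG.
  by rewrite GS inE.
- have [w wGS wmax] := ex_argmax v GS.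
  have [wS wG] : w \notin S /\ w \in G by move: wGS; rewrite inE => /andP[].
  have wz : w != z by apply: contraNneq wS => ->.
  case: (lerP (v w) (Dl #|S|)) => wD.
  + exists (S :\ z); split; first by left.
    apply: L0 => //; split => //.
    move=> _ b; rewrite !inE => /andP[bz bG]; rewrite bz /= => bS.
    rewrite cD prednK; last by apply/card_gt0P; exists z.
    apply: le_trans wD; apply: wmax; by rewrite inE bS bG.
  + exists (w |: (S :\ z)); split; first by right; exists w.
    have wSz : w \notin S :\ z by rewrite inE negb_and wS orbT.
    have cS' : #|w |: (S :\ z)| = #|S| by rewrite card_swap.
    apply: L0 => //.
    * apply/and3P; split.
      - by apply/subsetP => x xF; rewrite !inE (subsetP FS) // xFz // orbT.
      - apply/subsetP => x; rewrite !inE => /orP[/eqP->|/andP[-> /(subsetP SG)->//]].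
        by rewrite wz wG.
      - by rewrite cS'.
    * split; rewrite ?cS'.
      - move=> a b; rewrite !inE => /orP[/eqP->|/andP[az aS]] aF /andP[bz bG];
          rewrite negb_or => /andP[bw]; rewrite negb_and negbK (negbTE bz) /= => bS.
          by apply: wmax; rewrite inE bS bG.
        exact: sw aS (nzF a aF az) bG bS.
      - move=> a; rewrite !inE => /orP[/eqP->|/andP[az aS]] aF; first exact: ltW.
        exact: dr aS (nzF a aF az).
      - move=> Sk' b; rewrite !inE => /andP[bz bG];
          rewrite negb_or => /andP[bw]; rewrite negb_and negbK (negbTE bz) /= => bS.
        exact: ad Sk' b bG bS.
Qed.

Lemma Cap F G k v S : (k < K)%N -> opt F G k v S ->
  opt F G k.+1 v S \/
  exists w, [/\ w \in G, w \notin S, opt F G k.+1 v (w |: S) & obj v S < obj v (w |: S)].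
Proof.
move=> kK HO; have [sw dr ad] := L0' HO; case: HO => HS _.
have HS' := HS; case/and3P: HS' => FS SG Sk.
have famk : fam F G k.+1 S by apply/and3P; split => //; lia.
case: (ltnP #|S| k) => Sk'.
- left; apply: L0 => //; split => // _; exact: ad Sk'.
- case: (eqVneq (G :\: S) set0) => GS.
  + left; apply: L0 => //; split => // _ b bG bS.
    have : b \in G :\: S by rewrite inE bS bG.
    by rewrite GS inE.
  + have [w wGS wmax] := ex_argmax v GS.
    have [wS wG] : w \notin S /\ w \in G by move: wGS; rewrite inE => /andP[].
    case: (lerP (v w) (Dl #|S|.+1)) => wD.
    * left; apply: L0 => //; split => // _ b bG bS.
      apply: le_trans wD; apply: wmax; by rewrite inE bS bG.
    * right; exists w; split => //.
      - apply: L0 => //; first by apply: fam_add => //; lia.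
        split; rewrite ?cardsU1 ?wS ?add1n.
        + move=> a b; rewrite !inE => /orP[/eqP->|aS] aF bG; rewrite negb_or => /andP[bw bS].
            by apply: wmax; rewrite inE bS bG.
          exact: sw.
        + move=> a; rewrite !inE => /orP[/eqP->|aS] aF; first exact: ltW.
          apply: le_trans (ltW wD) _; exact: sw.
        + lia.
      - rewrite obj_add // /obj /Dl /= in wD *; lra.
Qed.

Lemma obj_out u v X z : (forall x, x != z -> v x = u x) -> z \notin X -> obj v X = obj u X.
Proof.
move=> E zX; rewrite /obj; congr (_ - _); apply: eq_bigr => x xX; apply: E.
by apply: contraNneq zX => <-.
Qed.

Lemma obj_in u v X z : (forall x, x != z -> v x = u x) -> z \in X -> obj v X = obj u X + (v z - u z).
Proof.
move=> E zX; rewrite /obj (big_setD1 z zX) [\sum_(x in X) u x](big_setD1 z zX) /=.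
have -> : \sum_(x in X :\ z) v x = \sum_(x in X :\ z) u x.
  by apply: eq_bigr => x; rewrite !inE => /andP[xz _]; exact: E.
ring.
Qed.

Lemma fam_sub F G k X : fam F G k X -> X \subset G.
Proof. by case/and3P. Qed.

Lemma M1 F G k u v S z : (k <= K)%N -> opt F G k u S -> z \in S ->
  (forall x, x != z -> v x = u x) -> v z <= u z ->
  opt F G k v S \/
  exists S', [/\ S' = S :\ z \/ (exists w, [/\ w \in G, w \notin S & S' = w |: (S :\ z)]),
                 opt F G k v S' & obj v S < obj v S'].
Proof.
move=> kK HO zS E vz; have HC := L0' HO; case: HO => HS Hopt.
have HS' := HS; case/and3P: HS' => FS SG Sk.
case: (boolP (z \in F)) => zF.
- left; split => // X HX; have zX : z \in X by case/and3P: HX => FX _ _; exact: subsetP FX z zF.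
  rewrite (obj_in E zX) (obj_in E zS); have := Hopt X HX; lra.
- have [S' [HS' [famS' optS']]] := Forbid kK HS (conds_weakF z HC) zS zF.
  have zS' : z \notin S' by apply/negP => /(subsetP (fam_sub famS')); rewrite !inE eqxx.
  have famS'' : fam F G k S'.
    case/and3P: famS' => a b c; apply/and3P; split => //.
    by apply: subset_trans b _; apply/subsetP => x; rewrite inE => /andP[].
  have EX X : fam F G k X -> z \notin X -> fam F (G :\ z) k X.
    case/and3P=> a b c zX; apply/and3P; split => //.
    by apply/subsetP => x xX; rewrite !inE (subsetP b) // andbT; apply: contraNneq zX => <-.
  case: (lerP (obj v S') (obj v S)) => cmp.
  + left; split => // X HX; case: (boolP (z \in X)) => zX.
    * rewrite (obj_in E zX) (obj_in E zS); have := Hopt X HX; lra.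
    * rewrite (obj_out E zX); apply: le_trans cmp; rewrite (obj_out E zS').
      exact: optS' _ (EX X HX zX).
  + right; exists S'; split => //; split => // X HX; case: (boolP (z \in X)) => zX.
    * apply: le_trans (ltW cmp); rewrite (obj_in E zX) (obj_in E zS); have := Hopt X HX; lra.
    * rewrite (obj_out E zX) (obj_out E zS'); exact: optS' _ (EX X HX zX).
Qed.

Lemma M2 F G k u v S y : (k <= K)%N -> opt F G k u S -> y \notin S ->
  (forall x, x != y -> v x = u x) -> u y <= v y ->
  opt F G k v S \/
  exists S', [/\ ((#|S| < k)%N /\ S' = y |: S) \/
                  (exists r, [/\ r \in S, r \notin F & S' = y |: (S :\ r)]),
                 opt F G k v S' & obj v S < obj v S'].
Proof.
move=> kK HO yS E vy; have HC := L0' HO; case: HO => HS Hopt.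
have HS' := HS; case/and3P: HS' => FS SG Sk.
have same X : fam F G k X -> y \notin X -> obj v X <= obj v S.
  by move=> HX yX; rewrite (obj_out E yX) (obj_out E yS); exact: Hopt.
case: (boolP (y \in G)) => yG; last first.
  left; split => // X HX; apply: same => //; apply: contra yG; exact: subsetP (fam_sub HX) y.
have yF : y \notin F by apply: contra yS; exact: subsetP FS y.
have famSy : fam F (G :\ y) k S.
  apply/and3P; split => //; apply/subsetP => x xS; rewrite !inE (subsetP SG) // andbT.
  by apply: contraNneq yS => <-.
have famY X : fam F G k X -> y \in X -> fam (y |: F) G k X.
  by case/and3P => a b c yX; apply/and3P; split => //; apply/subsetP => x; rewrite !inE => /orP[/eqP->|/(subsetP a)].
case: (Force kK famSy (conds_weakG y HC) yG yF) => [noX|[S' [HS' [famS' optS']]]].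
  left; split => // X HX; case: (boolP (y \in X)) => yX; last exact: same.
  by have := noX X; rewrite famY.
have yS' : y \in S' by case/and3P: famS' => a _ _; apply: (subsetP a); rewrite !inE eqxx.
have famS'' : fam F G k S'.
  case/and3P: famS' => a b c; apply/and3P; split => //.
  by apply: subset_trans a; apply/subsetP => x xF; rewrite !inE xF orbT.
case: (lerP (obj v S') (obj v S)) => cmp.
- left; split => // X HX; case: (boolP (y \in X)) => yX; last exact: same.
  apply: le_trans cmp; rewrite (obj_in E yX) (obj_in E yS'); have := optS' X (famY X HX yX); lra.
- right; exists S'; split => //; split => // X HX; case: (boolP (y \in X)) => yX.
  + rewrite (obj_in E yX) (obj_in E yS'); have := optS' X (famY X HX yX); lra.
  + exact: le_trans (same X HX yX) (ltW cmp).
Qed.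

Lemma Unfreeze F G k u S y : (k <= K)%N -> opt F G k u S -> y \in F ->
  opt (F :\ y) G k u S \/
  exists S', [/\ S' = S :\ y \/ (exists w, [/\ w \in G, w \notin S & S' = w |: (S :\ y)]),
                 opt (F :\ y) G k u S' & obj u S < obj u S'].
Proof.
move=> kK HO yF; have HC := L0' HO; case: HO => HS Hopt.
have HS' := HS; case/and3P: HS' => FS SG Sk.
have yS : y \in S by exact: subsetP FS y yF.
have eF : y |: (F :\ y) = F by rewrite setD1K.
have famS : fam (F :\ y) G k S.
  apply/and3P; split => //; apply: subset_trans FS; exact: subsetDl.
have HC' : conds (y |: (F :\ y)) G k u S by rewrite eF.
have yF' : y \notin F :\ y by rewrite !inE eqxx.
have [S' [HS' optS']] := Forbid kK famS HC' yS yF'.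
case: optS' => famS' optS'.
have famS'' : fam (F :\ y) G k S'.
  case/and3P: famS' => a b c; apply/and3P; split => //.
  by apply: subset_trans b _; apply/subsetP => x; rewrite inE => /andP[].
have EX X : fam (F :\ y) G k X -> y \in X -> fam F G k X.
  case/and3P=> a b c yX; apply/and3P; split => //; rewrite -eF.
  by apply/subsetP => x; rewrite in_setU1 => /orP[/eqP->|/(subsetP a)].
have EY X : fam (F :\ y) G k X -> y \notin X -> fam (F :\ y) (G :\ y) k X.
  case/and3P=> a b c yX; apply/and3P; split => //.
  by apply/subsetP => x xX; rewrite !inE (subsetP b) // andbT; apply: contraNneq yX => <-.
case: (lerP (obj u S') (obj u S)) => cmp.
- left; split => // X HX; case: (boolP (y \in X)) => yX.
  + exact: Hopt _ (EX X HX yX).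
  + exact: le_trans (optS' X (EY X HX yX)) cmp.
- right; exists S'; split => //; split => // X HX; case: (boolP (y \in X)) => yX.
  + exact: le_trans (Hopt _ (EX X HX yX)) (ltW cmp).
  + exact: optS' X (EY X HX yX).
Qed.

End Abs.

Ltac slia := repeat match goal with H : _ |- _ => clear H end; lia.

Section Game.
Variables (R : realFieldType) (n : nat) (Omega : finType) (G : search_game R n Omega).
Hypothesis vG : valid_game G.

Local Notation cl := (cell G).
Local Notation pr := (prior G).
Local Notation prof := (profile n Omega).
Implicit Types (T S Y Z : {set Omega}) (s : profile n Omega).

Lemma cell_in i w : w \in cl i w.
Proof. by case: vG. Qed.
Lemma cell_eq i w w' : w' \in cl i w -> cl i w' = cl i w.
Proof. by case: vG => _ [H _]; apply: H. Qed.
Lemma cell_sym i w w' : w' \in cl i w -> w \in cl i w'.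
Proof. by move=> /cell_eq ->; exact: cell_in. Qed.
Lemma prior_ge0 w : 0 <= pr w.
Proof. by case: vG => _ [_ [H _]]. Qed.
Lemma mu_gt0 i w : 0 < \sum_(x in cl i w) pr x.
Proof. by case: vG => _ [_ [_ [_ [H _]]]]. Qed.
Lemma cost_conv (i : 'I_n) j : (1 <= j)%N -> (j < cap G i)%N ->
  cost G i j - cost G i j.-1 <= cost G i j.+1 - cost G i j.
Proof. by case: vG => _ [_ [_ [_ [_ [_ [_ [H _]]]]]]] j1 jK; apply: H => //; lia. Qed.
Lemma rew_mono1 (i : 'I_n) m w : (1 <= m)%N -> (m.+1 <= n)%N -> rew G i m.+1 w <= rew G i m w.
Proof. by case: vG => _ [_ [_ [_ [_ [_ [_ [_ [_ [H _]]]]]]]]]; apply: H. Qed.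

Lemma rew_mono (i : 'I_n) a b w : (1 <= a)%N -> (a <= b)%N -> (b <= n)%N -> rew G i b w <= rew G i a w.
Proof.
move=> a1; elim: b => [|b IH] ab bn; first by lia.
case: (ltngtP a b.+1) ab => // [lt _|-> _]; last exact: lexx.
apply: le_trans (IH lt (ltnW bn)); apply: rew_mono1 => //; lia.
Qed.

Definition mu i w := \sum_(x in cl i w) pr x.
Definition Cst i w j := mu i w * cost G i j.
Lemma Cst_conv i w : forall j, (1 <= j)%N -> (j < cap G i)%N ->
  Cst i w j - Cst i w j.-1 <= Cst i w j.+1 - Cst i w j.
Proof.
move=> j j1 jK; rewrite /Cst -!mulrBr; apply: ler_wpM2l; last exact: cost_conv.
exact: ltW (mu_gt0 i w).
Qed.

Definition rewc (i : 'I_n) k x := rew G i (minn (maxn k 1) n) x.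
Definition val (i : 'I_n) x k := pr x * rewc i k x.

Lemma val_mono i x k1 k2 : (k1 <= k2)%N -> val i x k2 <= val i x k1.
Proof.
move=> k12; rewrite /val; apply: ler_wpM2l; first exact: prior_ge0.
have n1 : (0 < n)%N by case: i => /= m; lia.
rewrite /rewc; apply: rew_mono; lia.
Qed.

Lemma rewc_id i k x : (1 <= k)%N -> (k <= n)%N -> rewc i k x = rew G i k x.
Proof. by move=> k1 kn; rewrite /rewc; congr (rew _ _ _ _); lia. Qed.

Definition oth (s : prof) i x := #|[set j | (j != i) && (x \in s j x)]|.
Definition idx (s : prof) i (Y Z : {set Omega}) x := ((oth s i x + 1 + (x \in Y)) - (x \in Z))%N.
Definition vv (s : prof) i Y Z x := val i x (idx s i Y Z x).

Lemma searchers_oth s i x : searchers s x = (oth s i x + (x \in s i x))%N.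
Proof.
rewrite /searchers /oth (cardsD1 i) inE addnC; congr (_ + _)%N.
by apply: eq_card => j; rewrite !inE andbC.
Qed.

Lemma oth_lt s i x : (oth s i x < n)%N.
Proof.
rewrite /oth; apply: (@leq_trans #|[set~ i]|.+1).
  by rewrite ltnS; apply: subset_leq_card; apply/subsetP => j; rewrite !inE => /andP[].
by rewrite cardsC1 card_ord; case: i => /= m; lia.
Qed.

Lemma vv_act s i x : vv s i set0 set0 x = pr x * rew G i (oth s i x + 1) x.
Proof.
rewrite /vv /idx !inE /= addn0 subn0 /val rewc_id //; first by lia.
by have := oth_lt s i x; lia.
Qed.

Definition upd (s : prof) i w0 (T : {set Omega}) : prof :=
  [ffun j => if j == i then [ffun x => if x \in cl i w0 then T else s i x] else s j].

Lemma upd_j s i w0 T j : j != i -> upd s i w0 T j = s j.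
Proof. by move=> ji; rewrite /upd ffunE (negbTE ji). Qed.
Lemma upd_ix s i w0 T x : upd s i w0 T i x = if x \in cl i w0 then T else s i x.
Proof. by rewrite /upd !ffunE eqxx ffunE. Qed.

Lemma oth_upd_i s i w0 T x : oth (upd s i w0 T) i x = oth s i x.
Proof. by apply: eq_card => j; rewrite !inE; case: (eqVneq j i) => //= ji; rewrite upd_j. Qed.

Lemma oth_upd_j s i w0 T j x : j != i ->
  (oth (upd s i w0 T) j x + (x \in s i x) = oth s j x + (x \in upd s i w0 T i x))%N.
Proof.
move=> ji; rewrite /oth (cardsD1 i [set _ | _]) [in RHS](cardsD1 i [set _ | _]) !inE eq_sym ji /=.
have -> : #|[set k | (k != j) && (x \in upd s i w0 T k x)] :\ i| =
          #|[set k | (k != j) && (x \in s k x)] :\ i|.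
  by apply: eq_card => k; rewrite !inE; case: (eqVneq k i) => //= ki; rewrite upd_j.
rewrite addnAC [in RHS]addnAC [in RHS](addnC (x \in s i x)); congr (_ + _)%N.
Qed.

Lemma searchers_upd s i w0 T x : searchers (upd s i w0 T) x = (oth s i x + (x \in upd s i w0 T i x))%N.
Proof. by rewrite (searchers_oth _ i) oth_upd_i. Qed.

Lemma vv_upd_i s i w0 T Y Z : vv (upd s i w0 T) i Y Z =1 vv s i Y Z.
Proof. by move=> x; rewrite /vv /idx oth_upd_i. Qed.

Lemma valid_cell s i w x : valid_profile G s -> x \in cl i w -> s i x = s i w.
Proof. by move=> vs xw; case: (vs i) => H _; exact: H. Qed.

Lemma valid_upd s i w0 T : valid_profile G s -> T \subset cl i w0 -> (#|T| <= cap G i)%N ->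
  valid_profile G (upd s i w0 T).
Proof.
move=> vs TC Tk j; case: (eqVneq j i) => [->|ji]; last by rewrite upd_j.
case: (vs i) => H1 [H2 H3]; split; [|split].
- move=> w w' w'w; rewrite !upd_ix.
  case: (boolP (w \in cl i w0)) => wC.
    by rewrite -(cell_eq wC) w'w.
  case: (boolP (w' \in cl i w0)) => w'C; last exact: H1.
  by move: wC; rewrite -(cell_eq w'C) (cell_sym w'w).
- move=> w; rewrite upd_ix; case: ifP => // wC.
  by rewrite (cell_eq wC).
- by move=> w; rewrite upd_ix; case: ifP.
Qed.

Definition cellpay (s : prof) i w := \sum_(x in cl i w) pr x * payoff_at G s i x.

Lemma cellpay_obj s i w : valid_profile G s -> cellpay s i w = obj (Cst i w) (vv s i set0 set0) (s i w).
Proof.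
move=> vs; rewrite /cellpay /obj /Cst /mu mulr_suml.
have SC : s i w \subset cl i w by case: (vs i) => _ [H _]; exact: H.
rewrite -(@eq_bigr _ _ _ _ _ _ (fun x => (x \in s i w)%:R * (pr x * rew G i (oth s i x + 1) x) - pr x * cost G i #|s i w|)); last first.
  move=> x xC; rewrite /payoff_at (valid_cell vs xC) (searchers_oth _ i) (valid_cell vs xC).
  by case: (x \in s i w) => /=; ring.
rewrite sumrB; congr (_ - _).
rewrite [in RHS]big_mkcond [in LHS]big_mkcond /=; apply: eq_bigr => x _.
rewrite vv_act; case: (boolP (x \in s i w)) => xS.
  by rewrite (subsetP SC x xS) mul1r.
by case: (x \in cl i w); rewrite ?mul0r.
Qed.


Lemma obj_eqv (C : nat -> R) (v v' : Omega -> R) X : v =1 v' -> obj C v X = obj C v' X.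
Proof. by move=> E; rewrite /obj; congr (_ - _); apply: eq_bigr => x _; rewrite E. Qed.

Lemma payoff_upd s i w0 T : valid_profile G s -> T \subset cl i w0 -> (#|T| <= cap G i)%N ->
  payoff G (upd s i w0 T) i - payoff G s i =
  obj (Cst i w0) (vv s i set0 set0) T - obj (Cst i w0) (vv s i set0 set0) (s i w0).
Proof.
move=> vs TC Tk; have vs' := valid_upd vs TC Tk.
rewrite /payoff (bigID (fun x => x \in cl i w0)) [X in _ - X](bigID (fun x => x \in cl i w0)) /=.
have -> : \sum_(x | x \notin cl i w0) pr x * payoff_at G (upd s i w0 T) i x =
          \sum_(x | x \notin cl i w0) pr x * payoff_at G s i x.
  apply: eq_bigr => x xC; rewrite /payoff_at upd_ix (negbTE xC) searchers_upd (searchers_oth s i).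
  by rewrite upd_ix (negbTE xC).
have := cellpay_obj i w0 vs'; have := cellpay_obj i w0 vs; rewrite /cellpay.
rewrite upd_ix cell_in (obj_eqv _ _ (vv_upd_i s i w0 T set0 set0)).
move=> -> ->; ring.
Qed.

Lemma step_upd s i w0 T : valid_profile G s -> T \subset cl i w0 -> (#|T| <= cap G i)%N ->
  obj (Cst i w0) (vv s i set0 set0) (s i w0) < obj (Cst i w0) (vv s i set0 set0) T ->
  improvement_step G s (upd s i w0 T).
Proof.
move=> vs TC Tk lt; split; first exact: valid_upd.
exists i; split; first by move=> j ji; rewrite upd_j.
have := payoff_upd vs TC Tk; lra.
Qed.

Lemma payoff_decomp s i : payoff G s i = \sum_w (pr w / mu i w) * cellpay s i w.
Proof.
rewrite /payoff /cellpay; symmetry.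
transitivity (\sum_w \sum_x (if x \in cl i w then pr w / mu i w * (pr x * payoff_at G s i x) else 0)).
  by apply: eq_bigr => w _; rewrite mulr_sumr big_mkcond.
rewrite exchange_big; apply: eq_bigr => x _.
transitivity (\sum_(w in cl i x) pr w / mu i x * (pr x * payoff_at G s i x)).
  rewrite [RHS]big_mkcond; apply: eq_bigr => w _.
  case: (boolP (x \in cl i w)) => h.
    by have h' := cell_sym h; rewrite h' /mu (cell_eq h').
  case: (boolP (w \in cl i x)) => // h'.
  by rewrite (cell_sym h') in h.
rewrite -mulr_suml -mulr_suml -/(mu i x) mulfV ?mul1r //.
exact: lt0r_neq0 (mu_gt0 i x).
Qed.

Definition Stable (Fr : 'I_n -> Omega -> {set Omega}) (kr : 'I_n -> Omega -> nat) s Y Z :=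
  forall i w, opt (Cst i w) (Fr i w) (cl i w) (kr i w) (vv s i Y Z) (s i w).

Lemma nash_stable s : valid_profile G s ->
  Stable (fun _ _ => set0) (fun i _ => cap G i) s set0 set0 -> nash G s.
Proof.
move=> vs St i si vsi.
have vs' : valid_profile G (deviate s i si).
  by move=> j; rewrite /deviate ffunE; case: (eqVneq j i) => [->|].
rewrite !payoff_decomp; apply: ler_sum => w _; apply: ler_wpM2l.
  by apply: divr_ge0; [exact: prior_ge0 | exact: ltW (mu_gt0 i w)].
rewrite !cellpay_obj //.
have -> : deviate s i si i w = si w by rewrite /deviate !ffunE eqxx.
have -> : obj (Cst i w) (vv (deviate s i si) i set0 set0) (si w) = obj (Cst i w) (vv s i set0 set0) (si w).
  apply: obj_eqv => x; rewrite /vv /idx; congr (val _ _ (_ - _)%N); congr (_ + _ + _)%N.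
  by apply: eq_card => j; rewrite !inE /deviate ffunE; case: (eqVneq j i).
case: (St i w) => _ H; apply: H; apply/and3P; split.
- exact: sub0set.
- by case: vsi => _ [H _].
- by case: vsi => _ [_ H].
Qed.


Definition Rok (Fr : 'I_n -> Omega -> {set Omega}) (kr : 'I_n -> Omega -> nat) :=
  forall i w, (kr i w <= cap G i)%N /\ forall w', w' \in cl i w -> Fr i w' = Fr i w /\ kr i w' = kr i w.

Lemma cell_out i w w0 x : w \notin cl i w0 -> x \in cl i w -> x \notin cl i w0.
Proof.
move=> wC xw; apply: contra wC => xC.
by rewrite -(cell_eq xC) (cell_sym xw).
Qed.

Lemma Cst_eq i w w0 : w \in cl i w0 -> Cst i w = Cst i w0.
Proof. by move=> wC; rewrite /Cst /mu (cell_eq wC). Qed.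

Lemma stable_upd Fr kr Fr' kr' s i w0 S' Y Z Y' Z' :
  valid_profile G s -> Rok Fr' kr' -> Stable Fr kr s Y Z ->
  (forall j x, j != i \/ x \notin cl i w0 -> Fr' j x = Fr j x /\ kr' j x = kr j x) ->
  (forall x, ((x \in upd s i w0 S' i x) + (x \in Y') + (x \in Z) =
              (x \in s i x) + (x \in Y) + (x \in Z'))%N) ->
  (forall x, x \notin cl i w0 -> (x \in Y') = (x \in Y) /\ (x \in Z') = (x \in Z)) ->
  opt (Cst i w0) (Fr' i w0) (cl i w0) (kr' i w0) (vv s i Y' Z') S' ->
  Stable Fr' kr' (upd s i w0 S') Y' Z'.
Proof.
move=> vs HR St ER Es EC HO j w.
case: (eqVneq j i) => [->|ji].
- case: (boolP (w \in cl i w0)) => wC.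
  + have [Fe ke] := (HR i w0).2 w wC.
    rewrite upd_ix wC (Cst_eq wC) (cell_eq wC) Fe ke.
    by apply: (opt_ext _ HO) => x _; rewrite vv_upd_i.
  + have [Fe ke] := ER i w (or_intror wC).
    rewrite upd_ix (negbTE wC) Fe ke.
    apply: (opt_ext _ (St i w)) => x xw; rewrite vv_upd_i /vv /idx.
    by have [-> ->] := EC x (cell_out wC xw).
- have [Fe ke] := ER j w (or_introl ji).
  rewrite upd_j // Fe ke; apply: (opt_ext _ (St j w)) => x _.
  rewrite /vv /idx; congr (val _ _ _).
  have h1 := oth_upd_j s w0 S' x ji. have h2 := Es x.
  move: h1 h2; case: (x \in Y); case: (x \in Y'); case: (x \in Z); case: (x \in Z');
    case: (x \in s i x); case: (x \in upd s i w0 S' i x) => /=; lia.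
Qed.

Lemma stable_relax Fr kr Fr' kr' s i w0 Y Z :
  valid_profile G s -> Rok Fr' kr' -> Stable Fr kr s Y Z ->
  (forall j x, j != i \/ x \notin cl i w0 -> Fr' j x = Fr j x /\ kr' j x = kr j x) ->
  opt (Cst i w0) (Fr' i w0) (cl i w0) (kr' i w0) (vv s i Y Z) (s i w0) ->
  Stable Fr' kr' s Y Z.
Proof.
move=> vs HR St ER HO j w.
case: (eqVneq j i) => [->|ji].
- case: (boolP (w \in cl i w0)) => wC.
  + have [Fe ke] := (HR i w0).2 w wC.
    by rewrite (Cst_eq wC) (cell_eq wC) Fe ke (valid_cell vs wC).
  + by have [-> ->] := ER i w (or_intror wC); exact: St.
- by have [-> ->] := ER j w (or_introl ji); exact: St.
Qed.

Definition Reach Fr kr s := exists p, [/\ improvement_path G s p, valid_profile G (last s p) &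
  Stable Fr kr (last s p) set0 set0].

Lemma reach_cons Fr kr s s' : improvement_step G s s' -> Reach Fr kr s' -> Reach Fr kr s.
Proof. by move=> st [p [H1 H2 H3]]; exists (s' :: p); split. Qed.

Lemma reach_nil Fr kr s : valid_profile G s -> Stable Fr kr s set0 set0 -> Reach Fr kr s.
Proof. by move=> vs St; exists [::]; split. Qed.

Definition Phi (B : Omega -> nat) c s :=
  \sum_(i : 'I_n) \sum_x (x \in s i x)%:R * val i x (B x + c)%N.
Definition meas B c s := #|[set t : prof | Phi B c s < Phi B c t]|.

Lemma meas_lt B c s t : Phi B c s < Phi B c t -> (meas B c t < meas B c s)%N.
Proof.
move=> lt; apply: proper_card; apply/properP; split.
  by apply/subsetP => u; rewrite !inE => /(lt_trans lt).
by exists t; rewrite !inE ?lt // ltxx.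
Qed.

Lemma meas_ind (f : prof -> nat) (P : prof -> Prop) :
  (forall s, (forall t, (f t < f s)%N -> P t) -> P s) -> forall s, P s.
Proof.
move=> H s; have [m le] : exists m, (f s <= m)%N by exists (f s).
elim: m s le => [|m IH] s le; apply: H => t lt; first by lia.
by apply: IH; lia.
Qed.

Lemma sum_cell s i w0 (f : Omega -> R) : valid_profile G s ->
  \sum_x (x \in s i x)%:R * f x =
  \sum_(x | x \notin cl i w0) (x \in s i x)%:R * f x + \sum_(x in s i w0) f x.
Proof.
move=> vs; rewrite (bigID (fun x => x \in cl i w0)) /= addrC; congr (_ + _).
have SC : s i w0 \subset cl i w0 by case: (vs i) => _ [H _]; exact: H.
rewrite [RHS]big_mkcond [LHS]big_mkcond; apply: eq_bigr => x _.
case: (boolP (x \in cl i w0)) => xC; last first.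
  by case: (boolP (x \in s i w0)) => // /(subsetP SC); rewrite (negbTE xC).
rewrite (valid_cell vs xC); case: (x \in s i w0); by rewrite ?mul1r ?mul0r.
Qed.

Lemma Phi_upd B c s i w0 T : valid_profile G s -> T \subset cl i w0 -> (#|T| <= cap G i)%N ->
  Phi B c (upd s i w0 T) = Phi B c s - \sum_(x in s i w0) val i x (B x + c)%N
                                      + \sum_(x in T) val i x (B x + c)%N.
Proof.
move=> vs TC Tk; have vs' := valid_upd vs TC Tk.
rewrite /Phi (bigD1 i) // [in RHS](bigD1 i) //=.
have -> : \sum_(j | j != i) \sum_x (x \in upd s i w0 T j x)%:R * val j x (B x + c)%N =
          \sum_(j | j != i) \sum_x (x \in s j x)%:R * val j x (B x + c)%N.
  by apply: eq_bigr => j ji; rewrite upd_j.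
rewrite (sum_cell i w0 _ vs') (sum_cell i w0 _ vs) upd_ix cell_in.
have -> : \sum_(x | x \notin cl i w0) (x \in upd s i w0 T i x)%:R * val i x (B x + c)%N =
          \sum_(x | x \notin cl i w0) (x \in s i x)%:R * val i x (B x + c)%N.
  by apply: eq_bigr => x xC; rewrite upd_ix (negbTE xC).
ring.
Qed.

Lemma obj_gain (C : nat -> R) (v v' : Omega -> R) S S' :
  (forall x, v x <= v' x) -> (forall x, x \in S -> x \notin S' -> v' x = v x) ->
  obj C v S < obj C v S' -> obj C v' S < obj C v' S'.
Proof.
move=> le E lt.
have D T : obj C v' T = obj C v T + \sum_(x in T) (v' x - v x) by rewrite /obj sumrB; ring.
rewrite !D.
have : \sum_(x in S) (v' x - v x) <= \sum_(x in S') (v' x - v x).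
  rewrite [X in X <= _]big_mkcond [X in _ <= X]big_mkcond /=; apply: ler_sum => x _.
  case: (boolP (x \in S')) => xS'.
    by case: (x \in S); rewrite // subr_ge0.
  by case: (boolP (x \in S)) => // xS; rewrite E // subrr.
lra.
Qed.


Lemma not_stable Fr kr s Y Z : ~ Stable Fr kr s Y Z ->
  exists i w, ~ opt (Cst i w) (Fr i w) (cl i w) (kr i w) (vv s i Y Z) (s i w).
Proof.
move=> H; apply: NNPP => H'; apply: H => i w; apply: NNPP => H''; apply: H'.
by exists i, w.
Qed.

Lemma sum_swap (f : Omega -> R) S r y : r \in S -> y \notin S ->
  \sum_(x in y |: (S :\ r)) f x = \sum_(x in S) f x - f r + f y.
Proof.
move=> rS yS; rewrite sumU1; last by rewrite !inE negb_and yS orbT.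
by rewrite sumD1 //; ring.
Qed.

Lemma cold Fr kr (HR : Rok Fr kr) (B : Omega -> nat) : forall s Y,
  (forall a b, a \in Y -> b \in Y -> a = b) -> valid_profile G s -> Stable Fr kr s Y set0 ->
  (forall x, (searchers s x + (x \in Y))%N = B x) -> Reach Fr kr s.
Proof.
apply: (@meas_ind (meas B 0)) => s IH Y HY vs St inv.
case: (classic (Stable Fr kr s set0 set0)) => [St0|/not_stable [i [w0 nopt]]].
  exact: reach_nil.
have HO := St i w0.
have kK := (HR i w0).1.
case: (set_0Vmem Y) => [Y0|[y yY]].
  by subst Y; case: nopt.
have inY x : (x \in Y) = (x == y).
  by apply/idP/eqP => [xY|->//]; exact: HY.
have E x : x != y -> vv s i set0 set0 x = vv s i Y set0 x.
  by move=> xy; rewrite /vv /idx inY (negbTE xy) !inE.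
have le_idx x : (idx s i set0 set0 x <= idx s i Y set0 x)%N by rewrite /idx !inE; slia.
have Ey : vv s i Y set0 y <= vv s i set0 set0 y by apply: val_mono.
have SC : s i w0 \subset cl i w0 by case: (vs i) => _ [H _]; exact: H.
have sx x : x \in cl i w0 -> s i x = s i w0 by move=> xC; exact: valid_cell vs xC.
case: (boolP (y \in s i w0)) => yS.
  case: nopt; apply: (M3 HO) => x _ xS; first by apply: val_mono.
  by rewrite E //; apply: contraNneq xS => ->.
case: (M2 (@Cst_conv i w0) kK HO yS E Ey) => [//|[S' [form optS' lt]]].
have [S'C S'k] : S' \subset cl i w0 /\ (#|S'| <= cap G i)%N.
  by case: optS' => /and3P[_ ? ?] _; split => //; lia.
have yS' : y \in S' by case: form => [[_ ->]|[r [_ _ ->]]]; rewrite !inE eqxx.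
have yC := subsetP S'C y yS'.
have step := step_upd vs S'C S'k lt.
have vs' := valid_upd vs S'C S'k.
have ER : forall j x, j != i \/ x \notin cl i w0 -> Fr j x = Fr j x /\ kr j x = kr j x by [].
apply: (reach_cons step).
case: form => [[Sk' eS']|[r [rS rF eS']]].
- apply: reach_nil => //.
  apply: (stable_upd vs HR St ER) => //.
  + move=> x; rewrite upd_ix; case: (boolP (x \in cl i w0)) => xC.
      rewrite sx // eS' !inE inY.
      by case: (eqVneq x y) => [->|xy]; rewrite ?(negbTE yS) //=; case: (x \in s i w0).
    have xy : x != y by apply: contraNneq xC => ->.
    by rewrite !inE inY (negbTE xy).
  + move=> x xC; have xy : x != y by apply: contraNneq xC => ->.
    by rewrite !inE inY (negbTE xy).
- have ry : r != y by apply: contraNneq yS => <-.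
  have rC := subsetP SC r rS.
  have Es x : ((x \in upd s i w0 S' i x) + (x \in [set r]) + (x \in set0) =
               (x \in s i x) + (x \in Y) + (x \in set0))%N.
    rewrite upd_ix; case: (boolP (x \in cl i w0)) => xC.
      rewrite sx // eS' !inE inY.
      case: (eqVneq x y) => [->|xy]; first by rewrite (negbTE yS) eq_sym (negbTE ry).
      case: (eqVneq x r) => [->|xr] //=; first by rewrite rS.
    have xy : x != y by apply: contraNneq xC => ->.
    have xr : x != r by apply: contraNneq xC => ->.
    by rewrite !inE inY (negbTE xy) (negbTE xr).
  have fy : vv s i set0 set0 y = val i y (B y + 0)%N.
    rewrite /vv /idx; congr (val _ _ _); have := inv y; rewrite (searchers_oth s i) yY sx //.
    by rewrite (negbTE yS) !inE;slia.
  have fr : vv s i set0 set0 r = val i r (B r + 0)%N.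
    rewrite /vv /idx; congr (val _ _ _); have := inv r; rewrite (searchers_oth s i) inY (negbTE ry) sx //.
    by rewrite rS !inE;slia.
  apply: (IH (upd s i w0 S') _ [set r] _ vs').
  + apply: meas_lt; rewrite (Phi_upd B 0 vs S'C S'k) eS' (sum_swap _ rS yS).
    move: lt; rewrite eS' obj_swap // fy fr; lra.
  + by move=> a b; rewrite !inE => /eqP-> /eqP->.
  + apply: (stable_upd vs HR St ER Es).
      move=> x xC; have xy : x != y by apply: contraNneq xC => ->.
      have xr : x != r by apply: contraNneq xC => ->.
      by rewrite !inE inY (negbTE xy) (negbTE xr).
    apply: (M3 optS') => x _ xS'.
      have xr : x != r by move: xS'; rewrite eS' !inE => /orP[/eqP->|/andP[]//]; rewrite eq_sym.
      by rewrite /vv /idx !inE (negbTE xr).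
    by apply: val_mono; rewrite /idx !inE; slia.
  + move=> x; have := inv x; have := Es x; rewrite searchers_upd (searchers_oth s i) !inE; slia.
Qed.


Lemma swap_ind (S : {set Omega}) z w x : z \in S -> w \notin S ->
  ((x \in w |: (S :\ z)) + (x == z) = (x \in S) + (x == w))%N.
Proof.
move=> zS wS; have wz : w != z by apply: contraNneq wS => ->.
rewrite !inE; case: (eqVneq x w) => [->|xw] /=; first by rewrite (negbTE wS) (negbTE wz).
by case: (eqVneq x z) => [->|xz] /=; rewrite ?zS.
Qed.

Lemma del_ind (S : {set Omega}) z x : z \in S -> ((x \in S :\ z) + (x == z) = (x \in S))%N.
Proof. by move=> zS; rewrite !inE; case: (eqVneq x z) => [->|xz] /=; rewrite ?zS ?addn0. Qed.

Lemma add_ind (S : {set Omega}) w x : w \notin S -> (x \in w |: S) = ((x \in S) + (x == w))%N :> nat.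
Proof. by move=> wS; rewrite !inE; case: (eqVneq x w) => [->|xw] /=; rewrite ?(negbTE wS) ?addn0. Qed.

Lemma hot Fr kr (HR : Rok Fr kr) (B : Omega -> nat) : forall s Y z,
  (forall a b, a \in Y -> b \in Y -> a = b) -> z \notin Y -> valid_profile G s ->
  Stable Fr kr s Y [set z] ->
  (forall x, (searchers s x + (x \in Y))%N = (B x + (x == z))%N) -> Reach Fr kr s.
Proof.
apply: (@meas_ind (meas B 1)) => s IH Y z HY zY vs St inv.
case: (classic (Stable Fr kr s Y set0)) => [St0|/not_stable [i [w0 nopt]]].
  exact: (@cold Fr kr HR (fun x => (B x + (x == z))%N) s Y HY vs St0 inv).
have HO := St i w0.
have kK := (HR i w0).1.
have SC : s i w0 \subset cl i w0 by case: (vs i) => _ [H _]; exact: H.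
have sx x : x \in cl i w0 -> s i x = s i w0 by move=> xC; exact: valid_cell vs xC.
have E x : x != z -> vv s i Y set0 x = vv s i Y [set z] x.
  by move=> xz; rewrite /vv /idx !inE (negbTE xz).
have le1 x : (idx s i Y [set z] x <= idx s i Y set0 x)%N by rewrite /idx !inE; slia.
have Ez : vv s i Y set0 z <= vv s i Y [set z] z by apply: val_mono.
case: (boolP (z \in s i w0)) => zS; last first.
  case: nopt; apply: (M3 HO) => x _ xS; last by apply: val_mono.
  by rewrite E ?lexx //; apply: contraNneq zS => <-.
have zC := subsetP SC z zS.
case: (M1 (@Cst_conv i w0) kK HO zS E Ez) => [//|[S' [form optS' lt]]].
have [S'C S'k] : S' \subset cl i w0 /\ (#|S'| <= cap G i)%N.
  by case: optS' => /and3P[_ ? ?] _; split => //; lia.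
have out x : x \in s i w0 -> x \notin S' -> x = z.
  move=> xS; case: form => [->|[w [_ wS ->]]]; rewrite !inE ?negb_or; last case/andP => _.
  - by rewrite negb_and negbK xS orbF => /eqP.
  - by rewrite negb_and negbK xS orbF => /eqP.
have lt' : obj (Cst i w0) (vv s i set0 set0) (s i w0) < obj (Cst i w0) (vv s i set0 set0) S'.
  apply: (obj_gain _ _ lt) => x.
    by apply: val_mono; rewrite /idx !inE; slia.
  by move=> xS xS'; rewrite (out x xS xS') /vv /idx !inE (negbTE zY).
have step := step_upd vs S'C S'k lt'.
have vs' := valid_upd vs S'C S'k.
have ER : forall j x, j != i \/ x \notin cl i w0 -> Fr j x = Fr j x /\ kr j x = kr j x by [].
have xnz x : x \notin cl i w0 -> x != z by move=> xC; apply: contraNneq xC => ->.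
apply: (reach_cons step).
case: form => [eS'|[w [wC wS eS']]].
- have Es x : ((x \in upd s i w0 S' i x) + (x \in Y) + (x \in [set z]) =
               (x \in s i x) + (x \in Y) + (x \in set0))%N.
    rewrite upd_ix; case: (boolP (x \in cl i w0)) => xC.
      by rewrite sx // eS' in_set1 in_set0; have := del_ind x zS; slia.
    by rewrite !inE (negbTE (xnz x xC)).
  apply: (@cold Fr kr HR B _ Y HY vs').
    apply: (stable_upd vs HR St ER Es) => //.
    by move=> x xC; rewrite !inE (negbTE (xnz x xC)).
  move=> x; have := inv x; have := Es x; rewrite searchers_upd (searchers_oth s i) !inE; slia.
- have wz : w != z by apply: contraNneq wS => ->.
  have xnw x : x \notin cl i w0 -> x != w by move=> xC; apply: contraNneq xC => ->.
  case: (boolP (w \in Y)) => wY.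
  + have inY x : (x \in Y) = (x == w).
      by apply/idP/eqP => [xY|->//]; exact: HY.
    apply: reach_nil => //.
    have Es x : ((x \in upd s i w0 S' i x) + (x \in set0) + (x \in [set z]) =
                 (x \in s i x) + (x \in Y) + (x \in set0))%N.
      rewrite upd_ix; case: (boolP (x \in cl i w0)) => xC.
        by rewrite sx // eS' inY in_set1 in_set0; have := swap_ind x zS wS; slia.
      by rewrite inY !inE (negbTE (xnz x xC)) (negbTE (xnw x xC)).
    apply: (stable_upd vs HR St ER Es).
      by move=> x xC; rewrite inY !inE (negbTE (xnz x xC)) (negbTE (xnw x xC)).
    apply: (M3 optS') => x _ xS'; first by apply: val_mono; rewrite /idx !inE; slia.
    have xw : x != w by apply: contraNneq xS' => ->; rewrite eS' !inE eqxx.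
    by rewrite /vv /idx inY (negbTE xw) !inE.
  + have Es x : ((x \in upd s i w0 S' i x) + (x \in Y) + (x \in [set z]) =
                 (x \in s i x) + (x \in Y) + (x \in [set w]))%N.
      rewrite upd_ix; case: (boolP (x \in cl i w0)) => xC.
        by rewrite sx // eS' !in_set1; have := swap_ind x zS wS; slia.
      by rewrite !inE (negbTE (xnz x xC)) (negbTE (xnw x xC)).
    have fw : vv s i Y set0 w = val i w (B w + 1)%N.
      rewrite /vv /idx; congr (val _ _ _); have := inv w; rewrite (searchers_oth s i) sx //.
      by rewrite (negbTE wS) (negbTE wY) (negbTE wz) !inE;slia.
    have fz : vv s i Y set0 z = val i z (B z + 1)%N.
      rewrite /vv /idx; congr (val _ _ _); have := inv z; rewrite (searchers_oth s i) sx //.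
      by rewrite zS (negbTE zY) eqxx !inE;slia.
    apply: (IH (upd s i w0 S') _ Y w HY wY vs').
    * apply: meas_lt; rewrite (Phi_upd B 1 vs S'C S'k) eS' (sum_swap _ zS wS).
      move: lt; rewrite eS' obj_swap // fw fz; lra.
    * apply: (stable_upd vs HR St ER Es).
        by move=> x xC; rewrite !inE (negbTE (xnz x xC)) (negbTE (xnw x xC)).
      apply: (M3 optS') => x _ xS'; first by apply: val_mono; rewrite /idx !inE; slia.
      have xw : x != w by apply: contraNneq xS' => ->; rewrite eS' !inE eqxx.
      by rewrite /vv /idx !inE (negbTE xw).
    * move=> x; have := inv x; have := Es x; rewrite searchers_upd (searchers_oth s i) !inE; slia.
Qed.


Definition msr (Fr : 'I_n -> Omega -> {set Omega}) (kr : 'I_n -> Omega -> nat) :=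
  (\sum_(i : 'I_n) \sum_(x : Omega) (#|Fr i x| + (cap G i - kr i x)))%N.

Lemma msr_lt (Fr Fr' : 'I_n -> Omega -> {set Omega}) (kr kr' : 'I_n -> Omega -> nat) i w0 :
  (forall j x, j != i \/ x \notin cl i w0 -> Fr' j x = Fr j x /\ kr' j x = kr j x) ->
  (forall x, x \in cl i w0 ->
     (#|Fr' i x| + (cap G i - kr' i x) < #|Fr i x| + (cap G i - kr i x))%N) ->
  (msr Fr' kr' < msr Fr kr)%N.
Proof.
move=> ER Hx; rewrite /msr (bigD1 i) //= [X in (_ < X)%N](bigD1 i) //=.
have -> : (\sum_(j | j != i) \sum_x (#|Fr' j x| + (cap G j - kr' j x)))%N =
          (\sum_(j | j != i) \sum_x (#|Fr j x| + (cap G j - kr j x)))%N.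
  apply: eq_bigr => j ji; apply: eq_bigr => x _.
  by have [-> ->] := ER j x (or_introl ji).
rewrite ltn_add2r (bigD1 w0) //= [X in (_ < X)%N](bigD1 w0) //=.
have h1 := Hx w0 (cell_in i w0).
have h2 : (\sum_(x | x != w0) (#|Fr' i x| + (cap G i - kr' i x)) <=
           \sum_(x | x != w0) (#|Fr i x| + (cap G i - kr i x)))%N.
  apply: leq_sum => x _; case: (boolP (x \in cl i w0)) => xC.
    exact: ltnW (Hx x xC).
  by have [-> ->] := ER i x (or_intror xC).
lia.
Qed.

Lemma cell_same i w0 x x' : x' \in cl i x -> (x' \in cl i w0) = (x \in cl i w0).
Proof.
move=> x'x; apply/idP/idP => h.
  by rewrite -(cell_eq h) (cell_sym x'x).
by rewrite -(cell_eq h).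
Qed.

Lemma global_step (Fr : 'I_n -> Omega -> {set Omega}) (kr : 'I_n -> Omega -> nat) s : Rok Fr kr -> valid_profile G s -> Stable Fr kr s set0 set0 ->
  nash G s \/ exists Fr' kr', [/\ (msr Fr' kr' < msr Fr kr)%N, Rok Fr' kr' & Reach Fr' kr' s].
Proof.
move=> HR vs St.
case: (classic (exists i w, (Fr i w != set0) || (kr i w < cap G i)%N)) => [[i [w0 H]]|H]; last first.
  left; apply: nash_stable vs _ => i w /=.
  have [e1 e2] : Fr i w = set0 /\ kr i w = cap G i.
    have h := (HR i w).1.
    case: (eqVneq (Fr i w) set0) => [e|e]; last by case: H; exists i, w; rewrite e.
    split => //; case: (ltnP (kr i w) (cap G i)) => c; first by case: H; exists i, w; rewrite c orbT.
    by apply/eqP; rewrite eqn_leq h c.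
  by have := St i w; rewrite e1 e2.
have kK := (HR i w0).1.
have sameC x : x \in cl i w0 -> Fr i x = Fr i w0 /\ kr i x = kr i w0 := (HR i w0).2 x.
have SC : s i w0 \subset cl i w0 by case: (vs i) => _ [HH _]; exact: HH.
have sx x : x \in cl i w0 -> s i x = s i w0 by move=> xC; exact: valid_cell vs xC.
have FS : Fr i w0 \subset s i w0 by case: (St i w0) => /and3P[].
case: (ltnP (kr i w0) (cap G i)) => kc.
- pose kr' := fun j x => if (j == i) && (x \in cl i w0) then (kr i w0).+1 else kr j x.
  have ER : forall j x, j != i \/ x \notin cl i w0 -> Fr j x = Fr j x /\ kr' j x = kr j x.
    move=> j x [ji|xC]; rewrite /kr'; [rewrite (negbTE ji) | rewrite (negbTE xC) andbF]; by split.
  have HR' : Rok Fr kr'.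
    move=> j x; split.
      rewrite /kr'; case: ifP => [/andP[/eqP-> _]|_]; [exact: kc | exact: (HR j x).1].
    move=> x' x'x; have [e1 e2] := (HR j x).2 x' x'x; split => //.
    rewrite /kr'; case: (eqVneq j i) => [ji|ji] //=; subst j.
    by rewrite (cell_same w0 x'x) e2.
  have kr'w0 : kr' i w0 = (kr i w0).+1 by rewrite /kr' eqxx cell_in.
  have Hmsr : (msr Fr kr' < msr Fr kr)%N.
    apply: (msr_lt (i:=i) (w0:=w0) ER) => x xC; rewrite /kr' eqxx xC /=.
    have [_ e] := sameC x xC; rewrite e; have := kc; slia.
  right; exists Fr, kr'; split => //.
  case: (Cap (@Cst_conv i w0) kc (St i w0)) => [optk|[w [wC wS optw lt]]].
    apply: reach_nil => //; apply: (stable_relax vs HR' St ER); by rewrite kr'w0.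
  have [S'C S'k] : (w |: s i w0) \subset cl i w0 /\ (#|w |: s i w0| <= cap G i)%N.
    by case: optw => /and3P[_ ? ?] _; split => //; lia.
  have step := step_upd vs S'C S'k lt.
  have vs' := valid_upd vs S'C S'k.
  apply: (reach_cons step).
  have xnw x : x \notin cl i w0 -> x != w by move=> xC; apply: contraNneq xC => ->.
  have Es x : ((x \in upd s i w0 (w |: s i w0) i x) + (x \in set0) + (x \in set0) =
               (x \in s i x) + (x \in set0) + (x \in [set w]))%N.
    rewrite upd_ix; case: (boolP (x \in cl i w0)) => xC.
      by rewrite /= sx // (add_ind x wS) !in_set0 in_set1; slia.
    by rewrite !inE (negbTE (xnw x xC)).
  apply: (@hot Fr kr' HR' (searchers s) _ set0 w) => //.
  + by move=> a b; rewrite inE.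
  + by rewrite inE.
  + apply: (stable_upd vs HR' St ER Es).
      by move=> x xC; rewrite !inE (negbTE (xnw x xC)).
    rewrite kr'w0; apply: (M3 optw) => x _ xS'; first by apply: val_mono; rewrite /idx !inE; slia.
    have xw : x != w by apply: contraNneq xS' => ->; rewrite !inE eqxx.
    by rewrite /vv /idx !inE (negbTE xw).
  + move=> x; have := Es x; rewrite searchers_upd (searchers_oth s i) !inE; slia.
- have Fn : Fr i w0 != set0 by move: H; rewrite ltnNge kc orbF.
  case/set0Pn: Fn => y yF.
  pose Fr' := fun j x => if (j == i) && (x \in cl i w0) then Fr i w0 :\ y else Fr j x.
  have ER : forall j x, j != i \/ x \notin cl i w0 -> Fr' j x = Fr j x /\ kr j x = kr j x.
    move=> j x [ji|xC]; rewrite /Fr'; [rewrite (negbTE ji) | rewrite (negbTE xC) andbF]; by split.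
  have HR' : Rok Fr' kr.
    move=> j x; split; first exact: (HR j x).1.
    move=> x' x'x; have [e1 e2] := (HR j x).2 x' x'x; split => //.
    rewrite /Fr'; case: (eqVneq j i) => [ji|ji] //=; subst j.
    by rewrite (cell_same w0 x'x) e1.
  have Fr'w0 : Fr' i w0 = Fr i w0 :\ y by rewrite /Fr' eqxx cell_in.
  have Hmsr : (msr Fr' kr < msr Fr kr)%N.
    apply: (msr_lt (i:=i) (w0:=w0) ER) => x xC; rewrite /Fr' eqxx xC /=.
    have [e _] := sameC x xC; rewrite e [X in (_ < X + _)%N](cardsD1 y) yF; slia.
  right; exists Fr', kr; split => //.
  have yS := subsetP FS y yF.
  have yC := subsetP SC y yS.
  have xny x : x \notin cl i w0 -> x != y by move=> xC; apply: contraNneq xC => ->.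
  case: (Unfreeze (@Cst_conv i w0) kK (St i w0) yF) => [optu|[S' [form optS' lt]]].
    apply: reach_nil => //; apply: (stable_relax vs HR' St ER); by rewrite Fr'w0.
  have [S'C S'k] : S' \subset cl i w0 /\ (#|S'| <= cap G i)%N.
    by case: optS' => /and3P[_ ? ?] _; split => //; lia.
  have step := step_upd vs S'C S'k lt.
  have vs' := valid_upd vs S'C S'k.
  apply: (reach_cons step).
  case: form => [eS'|[w [wC wS eS']]].
  + have Es x : ((x \in upd s i w0 S' i x) + (x \in [set y]) + (x \in set0) =
                 (x \in s i x) + (x \in set0) + (x \in set0))%N.
      rewrite upd_ix; case: (boolP (x \in cl i w0)) => xC.
        by rewrite sx // eS' in_set1 !in_set0; have := del_ind x yS; slia.
      by rewrite !inE (negbTE (xny x xC)).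
    apply: (@cold Fr' kr HR' (searchers s) _ [set y]) => //.
    * by move=> a b; rewrite !inE => /eqP-> /eqP->.
    * apply: (stable_upd vs HR' St ER Es).
        by move=> x xC; rewrite !inE (negbTE (xny x xC)).
      rewrite Fr'w0; apply: (M3 optS') => x _ xS'; last by apply: val_mono; rewrite /idx !inE; slia.
      have xy : x != y by move: xS'; rewrite eS' !inE => /andP[].
      by rewrite /vv /idx !inE (negbTE xy).
    * move=> x; have := Es x; rewrite searchers_upd (searchers_oth s i) !inE; slia.
  + have wy : w != y by apply: contraNneq wS => ->.
    have xnw x : x \notin cl i w0 -> x != w by move=> xC; apply: contraNneq xC => ->.
    have Es x : ((x \in upd s i w0 S' i x) + (x \in [set y]) + (x \in set0) =
                 (x \in s i x) + (x \in set0) + (x \in [set w]))%N.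
      rewrite upd_ix; case: (boolP (x \in cl i w0)) => xC.
        by rewrite sx // eS' !in_set1 in_set0; have := swap_ind x yS wS; slia.
      by rewrite !inE (negbTE (xny x xC)) (negbTE (xnw x xC)).
    apply: (@hot Fr' kr HR' (searchers s) _ [set y] w) => //.
    * by move=> a b; rewrite !inE => /eqP-> /eqP->.
    * by rewrite !inE wy.
    * apply: (stable_upd vs HR' St ER Es).
        by move=> x xC; rewrite !inE (negbTE (xny x xC)) (negbTE (xnw x xC)).
      rewrite Fr'w0; apply: (M3 optS') => x _ xS'.
        have xy : x != y by move: xS'; rewrite eS' !inE => /orP[/eqP->|/andP[]//].
        by apply: val_mono; rewrite /idx !inE (negbTE xy); slia.
      have xw : x != w by apply: contraNneq xS' => ->; rewrite eS' !inE eqxx.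
      by apply: val_mono; rewrite /idx !inE (negbTE xw); slia.
    * move=> x; have := Es x; rewrite searchers_upd (searchers_oth s i) !inE; slia.
Qed.

Lemma path_cat s p q : improvement_path G s p -> improvement_path G (last s p) q ->
  improvement_path G s (p ++ q).
Proof. by elim: p s => [|t p IHp] s //= [H1 H2] H3; split => //; exact: IHp. Qed.

Lemma global : forall m (Fr : 'I_n -> Omega -> {set Omega}) (kr : 'I_n -> Omega -> nat) s, (msr Fr kr <= m)%N -> Rok Fr kr -> valid_profile G s ->
  Stable Fr kr s set0 set0 -> exists p, improvement_path G s p /\ nash G (last s p).
Proof.
elim=> [|m IH] Fr kr s Hm HR vs St;
  case: (global_step HR vs St) => [N|[Fr' [kr' [lt HR' [p [P1 P2 P3]]]]]].
- by exists [::].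
- by lia.
- by exists [::].
- have [q [Q1 Q2]] := IH Fr' kr' (last s p) ltac:(lia) HR' P2 P3.
  by exists (p ++ q); split; [exact: path_cat | rewrite last_cat].
Qed.

End Game.

Theorem proposition1 (R : realFieldType) (n : nat) (Omega : finType)
    (G : search_game R n Omega) :
  valid_game G ->
  forall s1 : profile n Omega, valid_profile G s1 ->
  exists p : seq (profile n Omega),
    improvement_path G s1 p /\ nash G (last s1 p).
Proof.
move=> vG s1 vs1.
pose Fr0 := fun i x => s1 i x; pose kr0 := fun i x => #|s1 i x|.
apply: (global vG (m := msr G Fr0 kr0) (Fr := Fr0) (kr := kr0)) => //.
- move=> i w; split; first by case: (vs1 i) => _ [_ H]; exact: H.
  by move=> w' w'w; rewrite /Fr0 /kr0 (valid_cell vs1 w'w).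
- move=> i w; split.
    apply/and3P; split => //; by case: (vs1 i) => _ [H _].
  move=> X /and3P[FX XC Xk].
  have -> : X = s1 i w by apply/eqP; rewrite eq_sym eqEcard FX.
  exact: lexx.
Qed.
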